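(* There exists a constant $\hat C_0>0$, depending only on $m,\alpha,\beta$, such that the following holds. Let $T>0$, let $(\hat u,\hat v)$ be a smooth solution of the NLDE on $\mathbb{R}\times[0,T]$ with $\mathcal{M}_0=\max_{\mathbb{R}\times[0,T]}(|\hat u|+|\hat v|+1)<\infty$, let $\tau>0$ and let $(u^{(\tau)},v^{(\tau)})$ be a time-splitting solution with mesh $\tau$. Then for all $j\in\mathbb{Z}$, all integers $n\ge0$ with $(n+1)\tau\le T$ and all $s\in[0,\tau)$, $$|\hat u(j\tau+s,n\tau+s)-u^{(\tau)}(j\tau+s,n\tau+s)|^2+|\hat v((j+2)\tau-s,n\tau+s)-v^{(\tau)}((j+2)\tau-s,n\tau+s)|^2$$ $$\le e^{2\tau}\Big(|\hat u(j\tau,n\tau)-u_j^n|^2+|\hat v((j+2)\tau,n\tau)-v_{j+2}^n|^2+\hat C_0\mathcal{M}_0^6\tau\Big).$$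
   Context: Fix constants $m\ge 0$ and $\alpha,\beta\in\mathbb{R}$. The NLDE for $(u,v):\mathbb{R}\times[0,T]\to\mathbb{C}^2$ is $u_t+u_x=imv+i\alpha u|v|^2+2i\beta(\bar u v+u\bar v)v$, $v_t-v_x=imu+i\alpha v|u|^2+2i\beta(\bar u v+u\bar v)u$. Let (N) denote the ODE system on $\mathbb{C}^2$: $\frac{du}{ds}=imv+i\alpha u|v|^2+2i\beta(\bar u v+u\bar v)v$, $\frac{dv}{ds}=imu+i\alpha v|u|^2+2i\beta(\bar u v+u\bar v)u$. Time-splitting scheme with mesh $\tau>0$: given $(u_j^0,v_j^0)_{j\in\mathbb{Z}}\subset\mathbb{C}^2$ with $\sum_j(|u_j^0|^2+|v_j^0|^2)<\infty$, set $(u^{(\tau)},v^{(\tau)})(x,0)=(u_j^0,v_j^0)$ for $x\in[j\tau,(j+1)\tau)$. Inductively, once $(u^{(\tau)},v^{(\tau)})(\cdot,n\tau)$ is defined, set for $t\in[n\tau,(n+1)\tau)$: $u^{(\tau)}(x,t)=u^{(\tau)}(x-(t-n\tau),n\tau)$, $v^{(\tau)}(x,t)=v^{(\tau)}(x+(t-n\tau),n\tau)$; let $(u^{(\tau)},v^{(\tau)})(x,(n+1)\tau-)$ be the left limit in $t$; and for each $x$ define $(u^{(\tau)},v^{(\tau)})(x,(n+1)\tau)$ as the value at $s=\tau$ of the solution of (N) with value $(u^{(\tau)},v^{(\tau)})(x,(n+1)\tau-)$ at $s=0$ (this is globally well defined). Notation: $(u_j^n,v_j^n)=(u^{(\tau)},v^{(\tau)})(j\tau,n\tau)$.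 *)

(* Defs.v *)
From Stdlib Require Import Reals ZArith.
From Coquelicot Require Import Coquelicot.

Open Scope R_scope.

Definition NLu (m al be : R) (u v : C) : C :=
  (Ci * RtoC m * v + Ci * RtoC al * u * RtoC (Cmod v ^ 2)
   + 2 * Ci * RtoC be * (Cconj u * v + u * Cconj v) * v)%C.

Definition NLv (m al be : R) (u v : C) : C :=
  (Ci * RtoC m * u + Ci * RtoC al * v * RtoC (Cmod u ^ 2)
   + 2 * Ci * RtoC be * (Cconj u * v + u * Cconj v) * u)%C.

(* (uh, vh) is a smooth (here: differentiable as a function of (x,t)) solution
   of the NLDE  u_t + u_x = NLu, v_t - v_x = NLv  on R x [0,T]. *)
Definition NLDE_solution (m al be T : R) (uh vh : R -> R -> C) : Prop :=
  forall x t, 0 <= t <= T ->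
    ex_filterdiff (fun p : R * R => uh (fst p) (snd p)) (locally (x, t)) /\
    ex_filterdiff (fun p : R * R => vh (fst p) (snd p)) (locally (x, t)) /\
    exists ux ut vx vt : C,
      is_derive (fun y => uh y t) x ux /\ is_derive (fun s => uh x s) t ut /\
      is_derive (fun y => vh y t) x vx /\ is_derive (fun s => vh x s) t vt /\
      (ut + ux)%C = NLu m al be (uh x t) (vh x t) /\
      (vt - vx)%C = NLv m al be (uh x t) (vh x t).

Definition ODE_N_solution (m al be : R) (w : R -> C * C) : Prop :=
  forall s, is_derive w s (NLu m al be (fst (w s)) (snd (w s)),
                           NLv m al be (fst (w s)) (snd (w s))).

Definition time_splitting (m al be tau : R) (U V : R -> R -> C) : Prop :=
  exists u0 v0 : Z -> C,
    (* square summable initial data *)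
    ex_series (fun k : nat =>
      Cmod (u0 (Z.of_nat k)) ^ 2 + Cmod (v0 (Z.of_nat k)) ^ 2
      + Cmod (u0 (- Z.of_nat k - 1)%Z) ^ 2 + Cmod (v0 (- Z.of_nat k - 1)%Z) ^ 2) /\
    (forall (j : Z) (x : R), IZR j * tau <= x < (IZR j + 1) * tau ->
        U x 0 = u0 j /\ V x 0 = v0 j) /\
    (forall (n : nat) (x t : R), INR n * tau <= t < (INR n + 1) * tau ->
        U x t = U (x - (t - INR n * tau)) (INR n * tau) /\
        V x t = V (x + (t - INR n * tau)) (INR n * tau)) /\
    (* at t = (n+1) tau: apply the time-tau flow of (N) to the left limit *)
    (forall (n : nat) (x : R), exists a b : C,
        filterlim (fun t => (U x t, V x t)) (at_left ((INR n + 1) * tau))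
                  (locally (a, b)) /\
        exists w : R -> C * C, ODE_N_solution m al be w /\
          w 0 = (a, b) /\ w tau = (U x ((INR n + 1) * tau), V x ((INR n + 1) * tau))).

(* Main.v *)
Require Import Defs.
From Stdlib Require Import Reals Lra Psatz.
From Coquelicot Require Import Coquelicot.
Open Scope R_scope.

Lemma scal_m1 : forall ux ut : C, plus (scal (-1) ux) ut = (ut - ux)%C.
Proof.
intros [a b] [c d]. unfold plus, scal; simpl. unfold prod_plus, prod_scal; simpl.
 unfold Cminus, Cplus, Copp; simpl. f_equal; cbn; ring.
Qed.
Lemma scal_1 : forall ux ut : C, plus (scal 1 ux) ut = (ut + ux)%C.
Proof.
intros [a b] [c d]. unfold plus, scal; simpl. unfold prod_plus, prod_scal; simpl.
 unfold Cplus; simpl. f_equal; cbn; ring.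
Qed.

Lemma derC_fst (g : R -> C) x l : is_derive g x l -> is_derive (fun y => fst (g y)) x (fst l).
Proof.
intros H. unfold is_derive in *.
eapply filterdiff_ext_lin.
apply (filterdiff_comp' g (fun p : C => fst p) x (fun y : R => scal y l)). exact H.
apply filterdiff_linear. apply (@is_linear_fst R_AbsRing R_NormedModule R_NormedModule).
intros y. destruct l; reflexivity.
Qed.
Lemma derC_snd (g : R -> C) x l : is_derive g x l -> is_derive (fun y => snd (g y)) x (snd l).
Proof.
intros H. unfold is_derive in *.
eapply filterdiff_ext_lin.
apply (filterdiff_comp' g (fun p : C => snd p) x (fun y : R => scal y l)). exact H.
apply filterdiff_linear. apply (@is_linear_snd R_AbsRing R_NormedModule R_NormedModule).
intros y. destruct l; reflexivity.
Qed.

Lemma derC_unique (g : R -> C) x l1 l2 : is_derive g x l1 -> is_derive g x l2 -> l1 = l2.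
Proof.
intros H1 H2.
destruct l1 as [a b], l2 as [c d].
apply derC_fst in H1 as F1. apply derC_fst in H2 as F2.
apply derC_snd in H1 as S1. apply derC_snd in H2 as S2.
apply is_derive_unique in F1, F2, S1, S2. simpl in *. congruence.
Qed.
Notation RR := (prod_NormedModule R_AbsRing R_NormedModule R_NormedModule).
Lemma path_diff (a b c d r0 : R) :
  filterdiff (fun r : R => ((a + c*r, b + d*r) : RR)) (locally r0) (fun h : R => ((c*h, d*h) : RR)).
Proof.
  apply (filterdiff_ext (fun r : R => plus ((a,b) : RR) ((c*r, d*r) : RR))).
  { intros y. unfold plus; simpl. unfold prod_plus; simpl. reflexivity. }
  apply (filterdiff_ext_lin _ (fun h : R => plus (zero : RR) ((c*h, d*h) : RR))).
  apply (@filterdiff_plus_fct R_AbsRing R_NormedModule RR (locally r0) _ (fun _ => (a,b)) (fun r => (c*r, d*r)) (fun _ => zero) (fun h => (c*h,d*h))).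
  apply filterdiff_const.
  apply filterdiff_linear.
  apply (is_linear_ext (fun h : R => ((scal c h, scal d h) : RR))).
  { intros y. reflexivity. }
  apply is_linear_prod; apply (@is_linear_scal_r R_AbsRing R_NormedModule);
  intros; apply Rmult_comm.
  intros y. apply plus_zero_l.
Qed.

Lemma comp_path (f : R -> R -> C) (L : RR -> C) a b c d r0 :
  filterdiff (fun p : RR => f (fst p) (snd p)) (locally ((a + c*r0, b + d*r0) : RR)) L ->
  filterdiff (fun r : R => f (a+c*r) (b+d*r)) (locally r0) (fun h : R => L ((c*h, d*h) : RR)).
Proof.
  intros H.
  apply (filterdiff_comp' (fun r : R => ((a+c*r, b+d*r):RR)) (fun p:RR => f (fst p) (snd p)) r0 (fun h : R => ((c*h,d*h):RR)) L).
  apply path_diff. exact H.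
Qed.

Lemma L_unique (f : R -> R -> C) (L : RR -> C) x t ux ut :
  filterdiff (fun p : RR => f (fst p) (snd p)) (locally ((x, t) : RR)) L ->
  is_derive (fun y => f y t) x ux ->
  is_derive (fun s => f x s) t ut ->
  L ((1,0) : RR) = ux /\ L ((0,1) : RR) = ut.
Proof.
  intros HL Hx Ht. pose proof (proj1 HL) as Hlin.
  split.
  - apply (derC_unique (fun y => f y t) x); [|exact Hx].
    pose proof (comp_path f L 0 t 1 0 x) as H1.
    assert (E : ((0+1*x, t+0*x):RR) = (x,t)) by (apply injective_projections; simpl; ring).
    rewrite E in H1. specialize (H1 HL).
    unfold is_derive.
    eapply filterdiff_ext. 2: eapply filterdiff_ext_lin. 2: exact H1.
    { intros y; simpl. f_equal; ring. }
    intros h. simpl.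
    assert (E2 : ((1*h, 0*h):RR) = scal h ((1,0):RR)).
    { unfold scal; simpl. unfold prod_scal; simpl. unfold scal; simpl. unfold mult; simpl. f_equal; ring. }
    rewrite E2. apply linear_scal. exact Hlin.
  - apply (derC_unique (fun s => f x s) t); [|exact Ht].
    pose proof (comp_path f L x 0 0 1 t) as H1.
    assert (E : ((x+0*t, 0+1*t):RR) = (x,t)) by (apply injective_projections; simpl; ring).
    rewrite E in H1. specialize (H1 HL).
    unfold is_derive.
    eapply filterdiff_ext. 2: eapply filterdiff_ext_lin. 2: exact H1.
    { intros y; simpl. f_equal; ring. }
    intros h. simpl.
    assert (E2 : ((0*h, 1*h):RR) = scal h ((0,1):RR)).
    { unfold scal; simpl. unfold prod_scal; simpl. unfold scal; simpl. unfold mult; simpl. f_equal; ring. }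
    rewrite E2. apply linear_scal. exact Hlin.
Qed.

Lemma diag (f : R -> R -> C) a b c r0 ux ut :
  ex_filterdiff (fun p : R*R => f (fst p) (snd p)) (locally ((a + c*r0, b + r0))) ->
  is_derive (fun y => f y (b+r0)) (a+c*r0) ux ->
  is_derive (fun s => f (a+c*r0) s) (b+r0) ut ->
  is_derive (fun r => f (a+c*r) (b+r)) r0 (plus (scal c ux) ut).
Proof.
  intros [L HL] Hx Ht.
  destruct (L_unique f L _ _ ux ut HL Hx Ht) as [E1 E2].
  pose proof (proj1 HL) as Hlin.
  pose proof (comp_path f L a b c 1 r0) as H1.
  assert (E : ((a+c*r0, b+1*r0):RR) = (a + c*r0, b + r0)) by (apply injective_projections; simpl; ring).
  rewrite E in H1. specialize (H1 HL).
  unfold is_derive.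
  eapply filterdiff_ext. 2: eapply filterdiff_ext_lin. 2: exact H1.
  { intros y; simpl. f_equal; ring. }
  intros h. simpl.
  assert (E2' : ((c*h, 1*h):RR) = plus (scal (c*h) ((1,0):RR)) (scal h ((0,1):RR))).
  { apply injective_projections; simpl; unfold plus, scal; simpl; unfold mult, plus; simpl; ring. }
  rewrite E2', (linear_plus _ Hlin), !(linear_scal _ Hlin), E1, E2.
  destruct ux as [u1 u2], ut as [v1 v2].
  apply injective_projections; simpl; unfold plus, scal; simpl; unfold mult, plus; simpl; ring.
Qed.

Lemma mvt_comp (h dh : R -> R) a b K : a <= b ->
  (forall r, a <= r <= b -> is_derive h r (dh r)) ->
  (forall r, a <= r <= b -> Rabs (dh r) <= K) ->
  Rabs (h b - h a) <= K * (b - a).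
Proof.
  intros Hab Hd HK.
  destruct (MVT_abs h dh a b) as [c [Hc Hr]].
  { intros c Hc. rewrite Rmin_left in Hc by lra. rewrite Rmax_right in Hc by lra.
    apply is_derive_Reals. apply Hd. exact Hc. }
  rewrite Rmin_left in Hr by lra. rewrite Rmax_right in Hr by lra.
  rewrite Hc. rewrite (Rabs_right (b - a)) by lra.
  apply Rmult_le_compat_r. lra. apply HK; exact Hr.
Qed.

Lemma mvtC (g dg : R -> C) a b K : a <= b ->
  (forall r, a <= r <= b -> is_derive g r (dg r)) ->
  (forall r, a <= r <= b -> Cmod (dg r) <= K) ->
  Cmod (g b - g a)%C <= 2 * K * (b - a).
Proof.
  intros Hab Hd HK.
  assert (K0 : 0 <= K). { eapply Rle_trans. apply Cmod_ge_0. apply (HK a). lra. }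
  assert (H1 : Rabs (fst (g b) - fst (g a)) <= K * (b - a)).
  { apply (mvt_comp (fun r => fst (g r)) (fun r => fst (dg r))); auto.
    intros r Hr. apply derC_fst. auto.
    intros r Hr. eapply Rle_trans. apply (re_le_Cmod (dg r)). auto. }
  assert (H2 : Rabs (snd (g b) - snd (g a)) <= K * (b - a)).
  { apply (mvt_comp (fun r => snd (g r)) (fun r => snd (dg r))); auto.
    intros r Hr. apply derC_snd. auto.
    intros r Hr. eapply Rle_trans. eapply Rle_trans; [apply Rmax_r | apply (Rmax_Cmod (dg r))]. auto. }
  eapply Rle_trans. apply Cmod_2Rmax.
  assert (Hm : Rmax (Rabs (fst (g b - g a)%C)) (Rabs (snd (g b - g a)%C)) <= K * (b - a)).
  { apply Rmax_lub; simpl; [exact H1 | exact H2]. }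
  assert (S1 : 0 <= sqrt 2) by apply sqrt_pos.
  assert (S2 : sqrt 2 * sqrt 2 = 2) by (apply sqrt_sqrt; lra).
  assert (S3 : sqrt 2 <= 2) by nra.
  assert (0 <= Rmax (Rabs (fst (g b - g a)%C)) (Rabs (snd (g b - g a)%C))).
  { eapply Rle_trans. apply Rabs_pos. apply Rmax_l. }
  nra.
Qed.
Open Scope R_scope.
Lemma NLu_bound m al be u v M : 0 <= m -> 1 <= M -> Cmod u <= M -> Cmod v <= M ->
  Cmod (NLu m al be u v) <= (m + Rabs al + 4 * Rabs be) * M^3.
Proof.
  intros Hm HM Hu Hv. unfold NLu.
  pose proof (Cmod_ge_0 u). pose proof (Cmod_ge_0 v).
  pose proof (Rabs_pos al). pose proof (Rabs_pos be).
  assert (T1 : Cmod (Ci * m * v)%C <= m * M^3).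
  { rewrite !Cmod_mult, Cmod_Ci, Cmod_R, Rabs_right by lra.
    assert (M <= M^3) by nra. nra. }
  assert (T2 : Cmod (Ci * al * u * (RtoC (Cmod v ^ 2)))%C <= Rabs al * M^3).
  { rewrite !Cmod_mult, Cmod_Ci, !Cmod_R, (Rabs_right (Cmod v ^ 2)) by nra.
    assert (Cmod u * Cmod v ^ 2 <= M^3).
    { simpl. apply Rmult_le_compat; try nra. }
    nra. }
  assert (T3 : Cmod (2 * Ci * be * (Cconj u * v + u * Cconj v) * v)%C <= 4 * Rabs be * M^3).
  { rewrite !Cmod_mult, Cmod_Ci, !Cmod_R.
    assert (Cmod (Cconj u * v + u * Cconj v)%C <= 2 * M^2).
    { eapply Rle_trans. apply Cmod_triangle. rewrite !Cmod_mult, !Cmod_conj.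
      assert (Cmod u * Cmod v <= M^2) by (simpl; apply Rmult_le_compat; nra). nra. }
    rewrite Rabs_right by lra.
    pose proof (Cmod_ge_0 (Cconj u * v + u * Cconj v)%C).
    assert (Cmod (Cconj u * v + u * Cconj v)%C * Cmod v <= 2 * M^2 * M) by (apply Rmult_le_compat; nra).
    nra. }
  eapply Rle_trans. apply Cmod_triangle.
  eapply Rle_trans. apply Rplus_le_compat_r. apply Cmod_triangle.
  nra.
Qed.
Lemma NLv_NLu m al be u v : NLv m al be u v = NLu m al be v u.
Proof. unfold NLu, NLv. ring. Qed.

Lemma final_arith p1 p2 a b q s tau E K:
  0 <= s < tau -> 0 <= K -> 1 + 2*tau <= E ->
  0 <= p1 -> 0 <= p2 -> 0 <= a -> 0 <= b ->
  a <= p1 + 2*K*s -> b <= p2 + 2*K*s -> q = K^2 ->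
  a^2 + b^2 <= E * (p1^2 + p2^2 + (8*q + 1) * tau).
Proof.
  intros Hs HK HE H1 H2 Ha Hb Hab Hbb Hq. subst q.
  assert (a^2 <= (p1 + 2*K*s)^2) by nra.
  assert (b^2 <= (p2 + 2*K*s)^2) by nra.
  assert (4*K*s*p1 <= s*p1^2 + 4*K^2*s) by (assert (0 <= s*(p1-2*K)^2) by (apply Rmult_le_pos; [lra | apply pow2_ge_0]); assert (s*(p1-2*K)^2 = s*p1^2 + 4*K^2*s - 4*K*s*p1) by ring; lra).
  assert (4*K*s*p2 <= s*p2^2 + 4*K^2*s) by (assert (0 <= s*(p2-2*K)^2) by (apply Rmult_le_pos; [lra | apply pow2_ge_0]); assert (s*(p2-2*K)^2 = s*p2^2 + 4*K^2*s - 4*K*s*p2) by ring; lra).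
  assert (8*K^2*(s + s^2) <= 8*K^2*(tau + tau^2)).
  { apply Rmult_le_compat_l. nra. nra. }
  assert ((tau + tau^2) <= E * tau) by nra.
  assert (0 <= p1^2 + p2^2) by nra.
  nra.
Qed.

Lemma char_est (g G : R -> C) s K A : 0 <= s ->
  (forall r, 0 <= r <= s -> is_derive g r (G r)) ->
  (forall r, 0 <= r <= s -> Cmod (G r) <= K) ->
  Cmod (g s - A)%C <= Cmod (g 0 - A)%C + 2 * K * s.
Proof.
  intros Hs Hd HK.
  replace (g s - A)%C with ((g 0 - A) + (g s - g 0))%C by ring.
  eapply Rle_trans. apply Cmod_triangle.
  apply Rplus_le_compat_l.
  replace (2 * K * s) with (2 * K * (s - 0)) by ring.
  apply (mvtC g G); auto.
Qed.

Theorem lemma4p1 :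
  forall m al be : R, 0 <= m ->
  exists C0 : R, 0 < C0 /\
  forall (T : R) (uh vh : R -> R -> C) (M0 : R),
    0 < T ->
    NLDE_solution m al be T uh vh ->
    (* M0 = max over R x [0,T] of |uh| + |vh| + 1 (finite) *)
    (forall x t, 0 <= t <= T -> Cmod (uh x t) + Cmod (vh x t) + 1 <= M0) ->
    (forall M, (forall x t, 0 <= t <= T -> Cmod (uh x t) + Cmod (vh x t) + 1 <= M) ->
       M0 <= M) ->
    forall (tau : R) (U V : R -> R -> C),
    0 < tau ->
    time_splitting m al be tau U V ->
    forall (j : Z) (n : nat) (s : R),
      (INR n + 1) * tau <= T ->
      0 <= s < tau ->
      let x1 := IZR j * tau + s in
      let x2 := (IZR j + 2) * tau - s in
      let t1 := INR n * tau + s in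
      let x0 := IZR j * tau in
      let x3 := (IZR j + 2) * tau in
      let t0 := INR n * tau in
      Cmod (uh x1 t1 - U x1 t1)%C ^ 2 + Cmod (vh x2 t1 - V x2 t1)%C ^ 2
      <= exp (2 * tau) *
         (Cmod (uh x0 t0 - U x0 t0)%C ^ 2 + Cmod (vh x3 t0 - V x3 t0)%C ^ 2
          + C0 * M0 ^ 6 * tau).
Proof.
  intros m al be Hm.
  set (c := m + Rabs al + 4 * Rabs be).
  assert (Hc : 0 <= c) by (unfold c; pose proof (Rabs_pos al); pose proof (Rabs_pos be); lra).
  exists (8 * c^2 + 1). split. { nra. }
  intros T uh vh M0 HT Hsol Hbd Hmin tau U V Htau Hts j n s Hn Hs.
  cbv zeta.
  set (x0 := IZR j * tau). set (x3 := (IZR j + 2) * tau). set (t0 := INR n * tau).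
  assert (Ht0 : 0 <= t0) by (unfold t0; pose proof (pos_INR n); nra).
  assert (HM1 : 1 <= M0).
  { pose proof (Hbd 0 0 ltac:(lra)). pose proof (Cmod_ge_0 (uh 0 0)). pose proof (Cmod_ge_0 (vh 0 0)). lra. }
  assert (Hub : forall x t, 0 <= t <= T -> Cmod (uh x t) <= M0 /\ Cmod (vh x t) <= M0).
  { intros x t Ht. pose proof (Hbd x t Ht). pose proof (Cmod_ge_0 (uh x t)). pose proof (Cmod_ge_0 (vh x t)). lra. }
  set (K := c * M0^3).
  assert (HK : 0 <= K) by (unfold K; apply Rmult_le_pos; [lra | apply pow_le; lra]).
  destruct Hts as [u0 [v0 [_ [_ [Htr _]]]]].
  destruct (Htr n (x0 + s) (t0 + s)) as [HU _]. { unfold t0; lra. }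
  destruct (Htr n (x3 - s) (t0 + s)) as [_ HV]. { unfold t0; lra. }
  fold t0 in HU, HV.
  replace (x0 + s - (t0 + s - t0)) with x0 in HU by ring.
  replace (x3 - s + (t0 + s - t0)) with x3 in HV by ring.
  rewrite HU, HV.
  assert (E1 : Cmod (Cminus (uh (x0 + 1 * s) (t0 + s)) (U x0 t0))
               <= Cmod (Cminus (uh (x0 + 1 * 0) (t0 + 0)) (U x0 t0)) + 2 * K * s).
  { apply (char_est (fun r => uh (x0 + 1 * r) (t0 + r))
            (fun r => NLu m al be (uh (x0 + 1 * r) (t0 + r)) (vh (x0 + 1 * r) (t0 + r)))
            s K (U x0 t0)); [lra | |].
    - intros r Hr.
      assert (Htr' : 0 <= t0 + r <= T) by (unfold t0 in *; lra).
      destruct (Hsol (x0 + 1 * r) (t0 + r) Htr') as [Hf [_ [ux [ut [vx [vt [Hux [Hut [_ [_ [Heq _]]]]]]]]]]].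
      rewrite <- Heq, <- scal_1.
      apply diag; assumption.
    - intros r Hr.
      assert (Htr' : 0 <= t0 + r <= T) by (unfold t0 in *; lra).
      destruct (Hub (x0 + 1 * r) (t0 + r) Htr').
      apply NLu_bound; assumption. }
  assert (E2 : Cmod (Cminus (vh (x3 + -1 * s) (t0 + s)) (V x3 t0))
               <= Cmod (Cminus (vh (x3 + -1 * 0) (t0 + 0)) (V x3 t0)) + 2 * K * s).
  { apply (char_est (fun r => vh (x3 + -1 * r) (t0 + r))
            (fun r => NLv m al be (uh (x3 + -1 * r) (t0 + r)) (vh (x3 + -1 * r) (t0 + r)))
            s K (V x3 t0)); [lra | |].
    - intros r Hr.
      assert (Htr' : 0 <= t0 + r <= T) by (unfold t0 in *; lra).
      destruct (Hsol (x3 + -1 * r) (t0 + r) Htr') as [_ [Hf [ux [ut [vx [vt [_ [_ [Hvx [Hvt [_ Heq]]]]]]]]]]].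
      rewrite <- Heq, <- scal_m1.
      apply diag; assumption.
    - intros r Hr.
      assert (Htr' : 0 <= t0 + r <= T) by (unfold t0 in *; lra).
      destruct (Hub (x3 + -1 * r) (t0 + r) Htr').
      rewrite NLv_NLu. apply NLu_bound; assumption. }
  replace (x0 + 1 * s) with (x0 + s) in E1 by ring.
  replace (x0 + 1 * 0) with x0 in E1 by ring.
  replace (x3 + -1 * s) with (x3 - s) in E2 by ring.
  replace (x3 + -1 * 0) with x3 in E2 by ring.
  replace (t0 + 0) with t0 in E1, E2 by ring.
  assert (HE : 1 + 2 * tau <= exp (2 * tau)).
  { pose proof (exp_ineq1 (2 * tau) ltac:(lra)). lra. }
  eapply Rle_trans.
  { apply (final_arith (Cmod (Cminus (uh x0 t0) (U x0 t0))) (Cmod (Cminus (vh x3 t0) (V x3 t0)))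
        (Cmod (Cminus (uh (x0 + s) (t0 + s)) (U x0 t0))) (Cmod (Cminus (vh (x3 - s) (t0 + s)) (V x3 t0)))
        (K^2) s tau (exp (2*tau)) K); try assumption; try reflexivity; apply Cmod_ge_0. }
  apply Rmult_le_compat_l. { left; apply exp_pos. }
  apply Rplus_le_compat_l.
  assert (H6 : 1 <= M0^6) by (apply pow_R1_Rle; lra).
  unfold K. replace ((c * M0 ^ 3) ^ 2) with (c^2 * M0^6) by ring.
  assert (0 <= c^2) by nra. nra.
Qed.
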